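(* Let $X$ be a graph and $\{a,b\},\{\alpha,\beta\}\in E(X)$. If the line graph $\mathcal{L}(X)$, with adjacency Hamiltonian, admits perfect state transfer from the vertex $ab$ to the vertex $\alpha\beta$ at time $\tau$, then $X$, with signless Laplacian Hamiltonian $Q$, admits perfect state transfer from $\mathbf e_a+\mathbf e_b$ to $\mathbf e_\alpha+\mathbf e_\beta$ at time $\tau$.
   Context: The line graph $\mathcal L(X)$ has vertex set $E(X)$, two edges being adjacent iff they share an endpoint in $X$; the vertex corresponding to edge $\{a,b\}$ is written $ab$ and its vertex state $\mathbf f_{ab}$. $Q=D+A$ is the signless Laplacian of $X$. Perfect state transfer from $\mathbf u$ to $\boldsymbol\mu$ at time $\tau$ with Hamiltonian $M$ means $e^{-\mathrm{i}\tau M}\mathbf u=\eta\boldsymbol\mu$ with $|\eta|=1$. *)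

(* Defs.v *)
From HB Require Import structures.
From mathcomp Require Import all_boot all_order all_algebra.
From mathcomp Require Import all_classical all_reals all_analysis.
From mathcomp Require Import complex.
Set Implicit Arguments. Unset Strict Implicit. Unset Printing Implicit Defensive.
Import Order.TTheory GRing.Theory Num.Theory numFieldNormedType.Exports.
Local Open Scope ring_scope.
Local Open Scope classical_set_scope.
Local Open Scope ring_scope.


Definition simple_graph (n : nat) (adj : rel 'I_n) : Prop :=
  symmetric adj /\ irreflexive adj.

Definition edge_set (n : nat) (adj : rel 'I_n) : {set {set 'I_n}} :=
  [set A : {set 'I_n} | [exists x, exists y, adj x y && (A == finset.setU (finset.set1 x) (finset.set1 y))]].

Section Defs.
Variable R : realType.
Local Notation C := R[i].

Definition adjmx (n : nat) (adj : rel 'I_n) : 'M[C]_n :=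
  \matrix_(i, j) (adj i j)%:R.

Definition degmx (n : nat) (adj : rel 'I_n) : 'M[C]_n :=
  \matrix_(i, j) ((i == j)%:R * #|[set k | adj i k]|%:R).

Definition signless_laplacian (n : nat) (adj : rel 'I_n) : 'M[C]_n :=
  degmx adj + adjmx adj.

(* Adjacency matrix of the line graph L(X); its vertices are the edges of X,
   enumerated as 'I_#|E(X)| via enum_val. Two distinct edges are adjacent
   iff they share an endpoint. *)
Definition line_graph_adjmx (n : nat) (adj : rel 'I_n)
  : 'M[C]_(#|edge_set adj|) :=
  \matrix_(i, j)
    ((i != j) && (enum_val i :&: enum_val j != finset.set0))%:R.

Definition evec (m : nat) (i : 'I_m) : 'cV[C]_m := \col_k (k == i)%:R.

Definition expmx_partial (m : nat) (A : 'M[C]_m) (N : nat) : 'M[C]_m :=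
  \sum_(k < N) (k`!%:R)^-1 *: A ^+ k.

Definition is_expmx (m : nat) (A E : 'M[C]_m) : Prop :=
  forall i j,
    (fun N => complex.Re (expmx_partial A N i j)) @ \oo --> (complex.Re (E i j) : R) /\
    (fun N => complex.Im (expmx_partial A N i j)) @ \oo --> (complex.Im (E i j) : R).

(* Perfect state transfer from u to mu at time tau with Hamiltonian M:
   e^{-i tau M} u = eta mu with |eta| = 1. *)
Definition pst (m : nat) (M : 'M[C]_m) (u mu : 'cV[C]_m) (tau : R) : Prop :=
  exists E : 'M[C]_m,
    is_expmx ((Complex 0 (- tau)) *: M) E /\
    exists eta : C, `|eta| = 1 /\ E *m u = eta *: mu.

End Defs.

(* Main.v *)
Require Import Defs.
From HB Require Import structures.
From mathcomp Require Import all_boot all_order all_algebra.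
From mathcomp Require Import all_classical all_reals all_analysis.
From mathcomp Require Import complex.
From mathcomp Require Import ring lra zify.
Import Order.TTheory GRing.Theory Num.Theory.
Set Implicit Arguments. Unset Strict Implicit. Unset Printing Implicit Defensive.
Local Open Scope ring_scope.


Section Norms.
Variable R : realType.
Local Notation C := R[i].

Definition n1 (z : C) : R := `|complex.Re z| + `|complex.Im z|.

Lemma n1_ge0 z : 0 <= n1 z.
Proof. by rewrite /n1 addr_ge0. Qed.

Lemma cReD (x y : C) : complex.Re (x + y) = complex.Re x + complex.Re y.
Proof. by case: x; case: y. Qed.
Lemma cImD (x y : C) : complex.Im (x + y) = complex.Im x + complex.Im y.
Proof. by case: x; case: y. Qed.
Lemma cReN (x : C) : complex.Re (- x) = - complex.Re x.
Proof. by case: x. Qed.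
Lemma cImN (x : C) : complex.Im (- x) = - complex.Im x.
Proof. by case: x. Qed.
Lemma cReM (x y : C) : complex.Re (x * y) = complex.Re x * complex.Re y - complex.Im x * complex.Im y.
Proof. by case: x; case: y. Qed.
Lemma cImM (x y : C) : complex.Im (x * y) = complex.Re x * complex.Im y + complex.Im x * complex.Re y.
Proof. by case: x => a b; case: y => c d /=. Qed.
Lemma cRe0 : complex.Re (0 : C) = 0. Proof. by []. Qed.
Lemma cIm0 : complex.Im (0 : C) = 0. Proof. by []. Qed.

Lemma cRe_sum I (r : seq I) (P : pred I) (F : I -> C) :
  complex.Re (\sum_(i <- r | P i) F i) = \sum_(i <- r | P i) complex.Re (F i).
Proof. by elim/big_rec2: _ => // i y1 y2 _ <-; rewrite cReD. Qed.
Lemma cIm_sum I (r : seq I) (P : pred I) (F : I -> C) :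
  complex.Im (\sum_(i <- r | P i) F i) = \sum_(i <- r | P i) complex.Im (F i).
Proof. by elim/big_rec2: _ => // i y1 y2 _ <-; rewrite cImD. Qed.

Lemma n1D x y : n1 (x + y) <= n1 x + n1 y.
Proof.
rewrite /n1 cReD cImD.
have h1 := ler_normD (complex.Re x) (complex.Re y).
have h2 := ler_normD (complex.Im x) (complex.Im y).
lra.
Qed.

Lemma n1N x : n1 (- x) = n1 x.
Proof. by rewrite /n1 cReN cImN !normrN. Qed.

Lemma n1M x y : n1 (x * y) <= n1 x * n1 y.
Proof.
rewrite /n1 cReM cImM.
set a := complex.Re x; set b := complex.Im x; set c := complex.Re y; set d := complex.Im y.
have h1 : `|a * c - b * d| <= `|a| * `|c| + `|b| * `|d|.
  by rewrite -!normrM (le_trans (ler_normB _ _)).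
have h2 : `|a * d + b * c| <= `|a| * `|d| + `|b| * `|c|.
  by rewrite -!normrM (le_trans (ler_normD _ _)).
rewrite mulrDl !mulrDr; lra.
Qed.

Lemma n1_sum I (r : seq I) (P : pred I) (F : I -> C) :
  n1 (\sum_(i <- r | P i) F i) <= \sum_(i <- r | P i) n1 (F i).
Proof.
elim/big_rec2: _ => [|i y1 y2 _ h]; first by rewrite /n1 normr0 addr0.
by apply: le_trans (n1D _ _) _; rewrite lerD2l.
Qed.

Lemma n1_Re z : `|complex.Re z| <= n1 z.
Proof. by rewrite /n1 lerDl. Qed.
Lemma n1_Im z : `|complex.Im z| <= n1 z.
Proof. by rewrite /n1 lerDr. Qed.

Lemma natC (k : nat) : (k%:R : C) = (k%:R : R)%:C%C.
Proof. by rewrite rmorph_nat. Qed.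

Lemma n1_natV k : n1 ((k%:R)^-1 : C) = (k%:R)^-1.
Proof.
rewrite natC -fmorphV /n1 /= normr0 addr0 ger0_norm // invr_ge0 ler0n.
Qed.

Lemma n1_nat k : n1 (k%:R : C) = k%:R.
Proof. by rewrite natC /n1 /= normr0 addr0 ger0_norm // ler0n. Qed.

End Norms.


Section MNorm.
Variable R : realType.
Local Notation C := R[i].

Definition mn m p (A : 'M[C]_(m, p)) : R := \sum_i \sum_j n1 (A i j).

Lemma mn_ge0 m p (A : 'M[C]_(m, p)) : 0 <= mn A.
Proof. by apply: sumr_ge0 => i _; apply: sumr_ge0 => j _; apply: n1_ge0. Qed.

Lemma mn_entry m p (A : 'M[C]_(m, p)) i j : n1 (A i j) <= mn A.
Proof.
rewrite /mn (bigD1 i) //= (bigD1 j) //= -addrA lerDl.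
apply: addr_ge0; first by apply: sumr_ge0 => ? _; apply: n1_ge0.
by apply: sumr_ge0 => ? _; apply: sumr_ge0 => ? _; apply: n1_ge0.
Qed.

Lemma mnD m p (A B : 'M[C]_(m, p)) : mn (A + B) <= mn A + mn B.
Proof.
rewrite /mn -big_split /=; apply: ler_sum => i _.
rewrite -big_split /=; apply: ler_sum => j _; rewrite mxE; exact: n1D.
Qed.

Lemma mnN m p (A : 'M[C]_(m, p)) : mn (- A) = mn A.
Proof. by rewrite /mn; apply: eq_bigr => i _; apply: eq_bigr => j _; rewrite mxE n1N. Qed.

Lemma mn_sum m p I (r : seq I) (P : pred I) (F : I -> 'M[C]_(m, p)) :
  mn (\sum_(i <- r | P i) F i) <= \sum_(i <- r | P i) mn (F i).
Proof.
elim/big_rec2: _ => [|i y1 y2 _ h].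
  by rewrite /mn big1 // => i _; rewrite big1 // => j _; rewrite mxE /n1 normr0 addr0.
by apply: le_trans (mnD _ _) _; rewrite lerD2l.
Qed.

Lemma mnZ m p (z : C) (A : 'M[C]_(m, p)) : mn (z *: A) <= n1 z * mn A.
Proof.
rewrite /mn mulr_sumr; apply: ler_sum => i _; rewrite mulr_sumr; apply: ler_sum => j _.
by rewrite mxE n1M.
Qed.

Lemma mnM m p q (A : 'M[C]_(m, p)) (B : 'M[C]_(p, q)) : mn (A *m B) <= mn A * mn B.
Proof.
rewrite /mn mulr_suml; apply: ler_sum => i _.
apply: (@le_trans _ _ (\sum_j \sum_k n1 (A i k) * n1 (B k j))).
  apply: ler_sum => j _; rewrite mxE; apply: le_trans (n1_sum _ _ _) _.
  by apply: ler_sum => k _; apply: n1M.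
rewrite exchange_big /= mulr_suml; apply: ler_sum => k _.
rewrite -mulr_sumr; apply: ler_wpM2l; first exact: n1_ge0.
rewrite (bigD1 k) //= lerDl; apply: sumr_ge0 => ? _; apply: sumr_ge0 => ? _; apply: n1_ge0.
Qed.

Lemma mn1 m : mn (1%:M : 'M[C]_m) = m%:R.
Proof.
rewrite /mn (eq_bigr (fun _ => 1)) ?sumr_const ?card_ord //= => i _.
rewrite (bigD1 i) //= big1 ?addr0; first by rewrite mxE eqxx n1_nat.
by move=> j /negPf ji; rewrite mxE eq_sym ji /n1 normr0 addr0.
Qed.

Lemma mnX m (A : 'M[C]_m) k : mn (A ^+ k) <= (m%:R + 1) * mn A ^+ k.
Proof.
elim: k => [|k IH].
  by rewrite !expr0 mulr1 mn1 lerDl.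
rewrite exprSr -mulmxE exprSr mulrA.
apply: le_trans (mnM _ _) _; apply: ler_wpM2r; [exact: mn_ge0 | exact: IH].
Qed.

End MNorm.


Section Cvg.
Import numFieldNormedType.Exports.
Local Open Scope classical_set_scope.
Local Open Scope ring_scope.
Variable R : realType.
Local Notation C := R[i].

Definition ccvg (u : nat -> C) (l : C) :=
  (fun n => complex.Re (u n)) @ \oo --> complex.Re l /\
  (fun n => complex.Im (u n)) @ \oo --> complex.Im l.

Lemma ccvg_cst (z : C) : ccvg (fun _ => z) z.
Proof. by split; apply: cvg_cst. Qed.

Lemma ccvgD u v a b : ccvg u a -> ccvg v b -> ccvg (fun n => u n + v n) (a + b).
Proof.
move=> [h1 h2] [h3 h4]; split.
  by under eq_fun do rewrite cReD; rewrite cReD; apply: cvgD.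
by under eq_fun do rewrite cImD; rewrite cImD; apply: cvgD.
Qed.

Lemma ccvgM u v a b : ccvg u a -> ccvg v b -> ccvg (fun n => u n * v n) (a * b).
Proof.
move=> [h1 h2] [h3 h4]; split.
  have -> : (fun n => complex.Re (u n * v n)) =
    (fun n => complex.Re (u n) * complex.Re (v n) - complex.Im (u n) * complex.Im (v n)).
    by apply: funext => n; exact: cReM.
  by rewrite (cReM a b); apply: cvgB; apply: cvgM.
have -> : (fun n => complex.Im (u n * v n)) =
  (fun n => complex.Re (u n) * complex.Im (v n) + complex.Im (u n) * complex.Re (v n)).
  by apply: funext => n; exact: cImM.
by rewrite (cImM a b); apply: cvgD; apply: cvgM.
Qed.

Lemma ccvg_sum I (r : seq I) (P : pred I) (F : I -> nat -> C) (L : I -> C) :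
  (forall i, ccvg (F i) (L i)) ->
  ccvg (fun n => \sum_(i <- r | P i) F i n) (\sum_(i <- r | P i) L i).
Proof.
move=> h; elim: r => [|x r IH].
  by under eq_fun do rewrite big_nil; rewrite big_nil; apply: ccvg_cst.
under eq_fun do rewrite big_cons; rewrite big_cons.
by case: (P x) => //; apply: ccvgD.
Qed.

Lemma ccvg_unique u a b : ccvg u a -> ccvg u b -> a = b.
Proof.
case: a => a1 a2; case: b => b1 b2 [h1 h2] [h3 h4] /=.
have e1 : a1 = b1 by apply: cvg_unique h1 h3.
have e2 : a2 = b2 by apply: cvg_unique h2 h4.
by rewrite e1 e2.
Qed.

Lemma cvg_abs_le0 (x y : nat -> R) : (forall n, `|x n| <= y n) -> y @ \oo --> 0 -> x @ \oo --> 0.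
Proof.
move=> hb hy; apply: (@squeeze_cvgr _ _ _ _ (fun n => - y n) y) => //.
  by near=> n; have := hb n; rewrite ler_norml.
by rewrite -oppr0; apply: cvgN.
Unshelve. all: by end_near.
Qed.

Lemma ccvg_n1 u v l : ccvg v l -> (fun n => n1 (u n - v n)) @ \oo --> 0 -> ccvg u l.
Proof.
move=> [h1 h2] h; split.
  have : (fun n => complex.Re (u n - v n)) @ \oo --> 0.
    by apply: cvg_abs_le0 h => n; apply: n1_Re.
  move=> /(cvgD h1); rewrite addr0; apply: cvg_trans; apply: near_eq_cvg.
  near=> n; change (complex.Re (v n) + complex.Re (u n - v n) = complex.Re (u n)).
  by move: (u n) (v n) => [a b] [c d] /=; ring.
have : (fun n => complex.Im (u n - v n)) @ \oo --> 0.
  by apply: cvg_abs_le0 h => n; apply: n1_Im.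
move=> /(cvgD h2); rewrite addr0; apply: cvg_trans; apply: near_eq_cvg.
near=> n; change (complex.Im (v n) + complex.Im (u n - v n) = complex.Im (u n)).
by move: (u n) (v n) => [a b] [c d] /=; ring.
Unshelve. all: by end_near.
Qed.

Definition mcvg m p (U : nat -> 'M[C]_(m, p)) (L : 'M[C]_(m, p)) :=
  forall i j, ccvg (fun n => U n i j) (L i j).

Lemma mcvg_cst m p (A : 'M[C]_(m, p)) : mcvg (fun _ => A) A.
Proof. by move=> i j; apply: ccvg_cst. Qed.

Lemma mcvgM m p q (U : nat -> 'M[C]_(m, p)) (V : nat -> 'M[C]_(p, q)) L M :
  mcvg U L -> mcvg V M -> mcvg (fun n => U n *m V n) (L *m M).
Proof.
move=> hU hV i j; under eq_fun do rewrite mxE; rewrite mxE.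
by apply: ccvg_sum => k; apply: ccvgM.
Qed.

Lemma mcvg_unique m p (U : nat -> 'M[C]_(m, p)) L M : mcvg U L -> mcvg U M -> L = M.
Proof. by move=> h1 h2; apply/matrixP => i j; apply: ccvg_unique (h1 i j) (h2 i j). Qed.

Lemma mcvg_mn m p (U V : nat -> 'M[C]_(m, p)) L :
  mcvg V L -> (fun n => mn (U n - V n)) @ \oo --> 0 -> mcvg U L.
Proof.
move=> hV h i j; apply: ccvg_n1 (hV i j) _.
apply: cvg_abs_le0 h => n; rewrite ger0_norm ?n1_ge0 //.
by have := mn_entry (U n - V n) i j; rewrite !mxE.
Qed.

Lemma is_expmxE m (A E : 'M[C]_m) : is_expmx A E <-> mcvg (expmx_partial A) E.
Proof. by []. Qed.

End Cvg.


Section Exist.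
Import numFieldNormedType.Exports.
Local Open Scope classical_set_scope.
Local Open Scope ring_scope.
Variable R : realType.
Local Notation C := R[i].

Lemma expmx_partial_entry m (A : 'M[C]_m) K i j :
  expmx_partial A K i j = \sum_(0 <= k < K) ((k`!%:R)^-1 *: A ^+ k) i j.
Proof. by rewrite /expmx_partial summxE big_mkord. Qed.

Lemma term_bound m (A : 'M[C]_m) k :
  mn ((k`!%:R)^-1 *: A ^+ k) <= (m%:R + 1) * exp_coeff (mn A) k.
Proof.
apply: le_trans (mnZ _ _) _; rewrite n1_natV /exp_coeff /=.
rewrite mulrC mulrA; apply: ler_wpM2r; first by rewrite invr_ge0 ler0n.
exact: mnX.
Qed.

Lemma series_dom (u w : nat -> R) :
  (forall k, `|u k| <= w k) -> cvgn (series w) -> cvgn (series u).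
Proof.
move=> h hw; apply: normed_cvg; apply: (series_le_cvg _ _ _ hw) => k /=.
- exact: normr_ge0.
- exact: le_trans (normr_ge0 _) (h k).
- exact: h.
Qed.

Lemma expmx_ex m (A : 'M[C]_m) : exists E, is_expmx A E.
Proof.
set w := ((m%:R + 1) *: exp_coeff (mn A)).
have hw : cvgn (series w) by apply: is_cvg_seriesZ; apply: is_cvg_series_exp_coeff.
have hb : forall i j k, n1 (((k`!%:R)^-1 *: A ^+ k) i j) <= w k.
  move=> i j k; apply: le_trans (mn_entry _ i j) _; exact: term_bound.
have hre : forall i j, cvgn (series (fun k => complex.Re (((k`!%:R)^-1 *: A ^+ k) i j))).
  by move=> i j; apply: series_dom hw => k; apply: le_trans (n1_Re _) (hb i j k).
have him : forall i j, cvgn (series (fun k => complex.Im (((k`!%:R)^-1 *: A ^+ k) i j))).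
  by move=> i j; apply: series_dom hw => k; apply: le_trans (n1_Im _) (hb i j k).
exists (\matrix_(i, j) Complex
  (limn (series (fun k => complex.Re (((k`!%:R)^-1 *: A ^+ k) i j))))
  (limn (series (fun k => complex.Im (((k`!%:R)^-1 *: A ^+ k) i j))))).
move=> i j; rewrite mxE /=; split.
  have -> : (fun N => complex.Re (expmx_partial A N i j)) =
     series (fun k => complex.Re (((k`!%:R)^-1 *: A ^+ k) i j)).
    by apply: funext => N; rewrite expmx_partial_entry cRe_sum.
  exact: hre.
have -> : (fun N => complex.Im (expmx_partial A N i j)) =
   series (fun k => complex.Im (((k`!%:R)^-1 *: A ^+ k) i j)).
  by apply: funext => N; rewrite expmx_partial_entry cIm_sum.
exact: him.
Qed.

End Exist.


Lemma cauchy_reindex (V : zmodType) K (f : nat -> nat -> V) :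
  \sum_(0 <= k < K) \sum_(0 <= i < k.+1) f (k - i)%N i =
  \sum_(0 <= i < K) \sum_(0 <= j < K) (if (j + i < K)%N then f j i else 0).
Proof.
have e1 : forall k, (k < K)%N -> \sum_(0 <= i < k.+1) f (k - i)%N i =
    \sum_(0 <= i < K) (if (i <= k)%N then f (k - i)%N i else 0).
  move=> k kK; rewrite (big_cat_nat (leq0n k.+1) kK) /=.
  rewrite [X in _ = _ + X]big1_seq ?addr0; last first.
    move=> i /andP[_]; rewrite mem_index_iota => /andP[ki _].
    by have -> : (i <= k)%N = false by lia.
  by apply: eq_big_seq => i; rewrite mem_index_iota => /andP[_ ik]; rewrite -ltnS ik.
rewrite (eq_big_seq (fun k => \sum_(0 <= i < K) (if (i <= k)%N then f (k - i)%N i else 0))); last first.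
  by move=> k; rewrite mem_index_iota => /andP[_ kK]; apply: e1.
rewrite exchange_big /=; apply: eq_big_seq => i; rewrite mem_index_iota => /andP[_ iK].
rewrite (big_cat_nat (leq0n i) (ltnW iK)) /= big1_seq ?add0r; last first.
  by move=> k /andP[_]; rewrite mem_index_iota => /andP[_ ki]; have -> : (i <= k)%N = false by lia.
rewrite -{1}(add0n i) big_addn.
rewrite (big_cat_nat (leq0n (K - i)) (leq_subr i K)) /=.
rewrite [X in _ = _ + X]big1_seq ?addr0; last first.
  move=> j /andP[_]; rewrite mem_index_iota => /andP[Kj _].
  by have -> : (j + i < K)%N = false by apply/negbTE; rewrite -leqNgt; lia.
apply: eq_big_seq => j; rewrite mem_index_iota => /andP[_ jK].
rewrite leq_addl addnK.
by have -> : (j + i < K)%N by lia.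
Qed.

Section Cauchy.
Import numFieldNormedType.Exports.
Local Open Scope classical_set_scope.
Local Open Scope ring_scope.
Variable R : realType.
Local Notation C := R[i].

Lemma fact_coef k i : (i <= k)%N ->
  ((k`!)%:R : C)^-1 * ('C(k, i))%:R = (((k - i)`!)%:R)^-1 * ((i`!)%:R)^-1.
Proof.
move=> hik.
have f1 : ((i`!)%:R : C) != 0 by rewrite pnatr_eq0 -lt0n fact_gt0.
have f2 : (((k - i)`!)%:R : C) != 0 by rewrite pnatr_eq0 -lt0n fact_gt0.
have f3 : ((k`!)%:R : C) != 0 by rewrite pnatr_eq0 -lt0n fact_gt0.
rewrite -(bin_fact hik) !natrM; field.
by rewrite f1 f2 /= pnatr_eq0 -lt0n bin_gt0 hik.
Qed.


Lemma mn0 m p : mn (0 : 'M[C]_(m, p)) = 0.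
Proof. by rewrite /mn big1 // => i _; rewrite big1 // => j _; rewrite mxE /n1 normr0 addr0. Qed.

Definition uterm m (Y : 'M[C]_m) j := ((j`!)%:R : C)^-1 *: Y ^+ j.

Lemma expmx_partial_nat m (Y : 'M[C]_m) K : expmx_partial Y K = \sum_(0 <= k < K) uterm Y k.
Proof. by rewrite /expmx_partial big_mkord. Qed.

Lemma term_binom m (Y Z : 'M[C]_m) k : GRing.comm Y Z ->
  uterm (Y + Z) k = \sum_(0 <= i < k.+1) uterm Y (k - i) *m uterm Z i.
Proof.
move=> cYZ; rewrite /uterm exprDn_comm // scaler_sumr big_mkord.
apply: eq_bigr => i _.
rewrite -[Y ^+ (k - i) * Z ^+ i *+ 'C(k, i)](@scaler_nat C) scalerA fact_coef; last by rewrite -ltnS ltn_ord.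
by rewrite -scalemxAl -scalemxAr scalerA mulmxE.
Qed.

Lemma S_eq m (Y Z : 'M[C]_m) K : GRing.comm Y Z ->
  expmx_partial (Y + Z) K = \sum_(0 <= i < K) \sum_(0 <= j < K)
     (if (j + i < K)%N then uterm Y j *m uterm Z i else 0).
Proof.
move=> cYZ; rewrite expmx_partial_nat.
rewrite (eq_bigr _ (fun k _ => term_binom k cYZ)).
exact: (cauchy_reindex K (fun j i => uterm Y j *m uterm Z i)).
Qed.

Lemma T_eq m (Y Z : 'M[C]_m) K :
  expmx_partial Y K *m expmx_partial Z K = \sum_(0 <= i < K) \sum_(0 <= j < K)
     uterm Y j *m uterm Z i.
Proof.
rewrite !expmx_partial_nat mulmx_suml exchange_big /=; apply: eq_bigr => i _.
by rewrite mulmx_sumr; apply: eq_bigr => j _.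
Qed.

Lemma D_eq m (Y Z : 'M[C]_m) K : GRing.comm Y Z ->
  expmx_partial (Y + Z) K - expmx_partial Y K *m expmx_partial Z K =
  - \sum_(0 <= i < K) \sum_(0 <= j < K)
     (if (K <= j + i)%N then uterm Y j *m uterm Z i else 0).
Proof.
move=> cYZ; rewrite S_eq // T_eq -sumrB -sumrN; apply: eq_bigr => i _.
rewrite -sumrB -sumrN; apply: eq_bigr => j _.
have [h|h] := leqP K (j + i); first by rewrite sub0r.
by rewrite subrr oppr0.
Qed.

Lemma sum_ge_h (a : nat -> R) h K : (h <= K)%N ->
  \sum_(0 <= j < K) (if (h <= j)%N then a j else 0) =
  \sum_(0 <= j < K) a j - \sum_(0 <= j < h) a j.
Proof.
move=> hK; rewrite !(big_cat_nat (leq0n h) hK) /=.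
rewrite big1_seq ?add0r; last first.
  by move=> j /andP[_]; rewrite mem_index_iota => /andP[_ jh]; have -> : (h <= j)%N = false by lia.
rewrite addrC addrK; apply: eq_big_seq => j; rewrite mem_index_iota => /andP[hj _].
by rewrite hj.
Qed.

Lemma cvg_half (u : nat -> R) (l : R) : u @ \oo --> l -> (fun K => u (K %/ 2)%N) @ \oo --> l.
Proof.
move=> h.
have h2 : (fun K => (K %/ 2)%N) @ \oo --> \oo.
  by apply/cvgnyPge => A; exists (2 * A)%N => // x /= hx; lia.
exact: cvg_comp h2 h.
Qed.

Lemma expmxD m (Y Z EY EZ : 'M[C]_m) : GRing.comm Y Z ->
  is_expmx Y EY -> is_expmx Z EZ -> is_expmx (Y + Z) (EY *m EZ).
Proof.
move=> cYZ hY hZ.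
have hT := mcvgM hY hZ.
apply: (mcvg_mn hT).
pose a := fun j => (m%:R + 1) * exp_coeff (mn Y) j.
pose b := fun j => (m%:R + 1) * exp_coeff (mn Z) j.
have ha : cvgn (series a).
  exact: (@is_cvg_seriesZ R (exp_coeff (mn Y)) (m%:R + 1) (is_cvg_series_exp_coeff (mn Y))).
have hb : cvgn (series b).
  exact: (@is_cvg_seriesZ R (exp_coeff (mn Z)) (m%:R + 1) (is_cvg_series_exp_coeff (mn Z))).
have a0 : forall j, 0 <= a j.
  by move=> j; rewrite /a mulr_ge0 ?exp_coeff_ge0 ?mn_ge0 // addr_ge0.
have b0 : forall j, 0 <= b j.
  by move=> j; rewrite /b mulr_ge0 ?exp_coeff_ge0 ?mn_ge0 // addr_ge0.
pose SA := fun n => \sum_(0 <= j < n) a j.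
pose SB := fun n => \sum_(0 <= j < n) b j.
have hSA : SA @ \oo --> limn (series a) := ha.
have hSB : SB @ \oo --> limn (series b) := hb.
pose g := fun K => (SA K - SA (K %/ 2)%N) * SB K + SA K * (SB K - SB (K %/ 2)%N).
have hg : g @ \oo --> 0.
  have -> : 0 = (limn (series a) - limn (series a)) * limn (series b) +
       limn (series a) * (limn (series b) - limn (series b)).
    by rewrite !subrr mul0r mulr0 addr0.
  apply: cvgD; apply: cvgM => //; apply: cvgB => //; exact: cvg_half.
apply: (@squeeze_cvgr _ _ _ _ (fun _ => 0) g) => //; last exact: cvg_cst.
near=> K; rewrite mn_ge0 /=.
set h := (K %/ 2)%N.
rewrite D_eq // mnN.
apply: le_trans (mn_sum _ _ _) _.
apply: (@le_trans _ _ (\sum_(0 <= i < K) \sum_(0 <= j < K)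
   ((if (h <= j)%N then a j * b i else 0) + (if (h <= i)%N then a j * b i else 0)))).
  apply: ler_sum => i _; apply: le_trans (mn_sum _ _ _) _; apply: ler_sum => j _.
  have hab : mn (uterm Y j *m uterm Z i) <= a j * b i.
    apply: le_trans (mnM _ _) _; apply: ler_pM; rewrite ?mn_ge0 //; exact: term_bound.
  have hab0 : 0 <= a j * b i by rewrite mulr_ge0.
  case: ifP => hK; last by rewrite mn0 addr_ge0 //; case: ifP.
  have [hj|hj] := leqP h j; first by rewrite (le_trans hab) // lerDl; case: ifP.
  have -> : (h <= i)%N by rewrite /h; lia.
  by rewrite add0r.
have hhK : (h <= K)%N by rewrite /h; lia.
rewrite le_eqVlt; apply/orP; left; apply/eqP.
rewrite /g /SA /SB /h.
rewrite -(sum_ge_h a hhK) -(sum_ge_h b hhK).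
rewrite [X in _ + X]mulrC [X in X + _]mulr_sumr [X in _ + X]mulr_suml -big_split /=.
apply: eq_bigr => i _.
rewrite big_split /= mulr_suml mulr_sumr; congr (_ + _); apply: eq_bigr => j _.
  by case: ifP => _; rewrite ?mul0r.
by case: ifP => _; rewrite ?mul0r ?mulr0 // mulrC.
Unshelve. all: by end_near.
Qed.

End Cauchy.


Section Graph.
Variables (n : nat) (adj : rel 'I_n).
Hypothesis hsym : symmetric adj.
Hypothesis hirr : irreflexive adj.

Lemma edgeP A : A \in edge_set adj -> exists x y, adj x y /\ A = [set x; y]%SET.
Proof.
rewrite inE => /existsP[x /existsP[y /andP[hxy /eqP ->]]].
by exists x, y.
Qed.

Lemma edge_in x y : adj x y -> [set x; y]%SET \in edge_set adj.
Proof.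
move=> h; rewrite inE; apply/existsP; exists x; apply/existsP; exists y.
by rewrite h eqxx.
Qed.

Lemma adj_neq x y : adj x y -> x != y.
Proof. by move=> h; apply/eqP => exy; move: h; rewrite exy hirr. Qed.

Lemma edge_card A : A \in edge_set adj -> #|A| = 2%N.
Proof. by move=> /edgeP[x [y [h ->]]]; rewrite cards2 adj_neq. Qed.

Lemma edge_inter A B : A \in edge_set adj -> B \in edge_set adj -> A != B ->
  (#|A :&: B| <= 1)%N.
Proof.
move=> hA hB hAB; rewrite leqNgt; apply/negP => h2.
have e1 : A :&: B == A.
  by rewrite eqEcard subsetIl edge_card.
have sAB : A \subset B by rewrite -(eqP e1) subsetIr.
move/negP: hAB; apply; by rewrite eqEcard sAB !edge_card.
Qed.

Lemma set2_neq_inj (u k k' : 'I_n) : u != k -> u != k' -> [set u; k]%SET = [set u; k']%SET -> k = k'.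
Proof.
move=> uk uk' e.
have : k \in [set u; k']%SET by rewrite -e !inE eqxx orbT.
by rewrite !inE eq_sym (negPf uk) => /eqP.
Qed.

Lemma deg_card u :
  #|[set A in edge_set adj | (u \in A) && (u \in A)]| = #|[set k | adj u k]|.
Proof.
have -> : [set A in edge_set adj | (u \in A) && (u \in A)] =
    [set [set u; k]%SET | k in [set k | adj u k]].
  apply/finset.setP => A; rewrite finset.in_set andbb.
  apply/andP/imsetP.
    move=> [hA]; have [x [y [hxy eA]]] := edgeP hA; rewrite eA !inE => /orP[] /eqP eu; subst u.
      by exists y; rewrite ?inE.
    by exists x; rewrite ?inE 1?hsym // finset.setUC.
  move=> [k]; rewrite inE => hk ->; split; first exact: edge_in.
  by rewrite !inE eqxx.
apply: card_in_imset => k k'; rewrite !inE => hk hk'.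
by apply: set2_neq_inj; apply: adj_neq.
Qed.

Lemma pair_card u v : u != v ->
  #|[set A in edge_set adj | (u \in A) && (v \in A)]| = adj u v.
Proof.
move=> uv.
have key : forall A, A \in edge_set adj -> u \in A -> v \in A ->
    adj u v /\ A = [set u; v]%SET.
  move=> A /edgeP[x [y [hxy ->]]]; rewrite !inE.
  move=> /orP[] /eqP eu /orP[] /eqP ev; subst.
  - by rewrite eqxx in uv.
  - by [].
  - by rewrite hsym finset.setUC.
  - by rewrite eqxx in uv.
case h: (adj u v).
  rewrite (_ : [set _ in _ | _] = [set [set u; v]%SET]) ?cards1 //.
  apply/finset.setP => A; rewrite finset.in_set finset.in_set1; apply/andP/eqP.
    by move=> [hA /andP[hu hv]]; case: (key A hA hu hv).
  by move=> ->; rewrite edge_in // !inE !eqxx orbT.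
rewrite (_ : [set _ in _ | _] = finset.set0) ?cards0 //.
apply/finset.setP => A; rewrite finset.in_set finset.in_set0; apply/negP => /andP[hA /andP[hu hv]].
by case: (key A hA hu hv); rewrite h.
Qed.

End Graph.


Section Scalar.
Import numFieldNormedType.Exports.
Local Open Scope classical_set_scope.
Local Open Scope ring_scope.
Variable R : realType.
Local Notation C := R[i].

Lemma scalar_pow p (z : C) k : (z%:M : 'M[C]_p) ^+ k = (z ^+ k)%:M.
Proof.
elim: k => [|k IH]; first by rewrite !expr0.
by rewrite !exprSr IH -mulmxE -scalar_mxM.
Qed.

Definition ssum (z : C) K := \sum_(k < K) ((k`!%:R)^-1 * z ^+ k).

Lemma partial_scalar p (z : C) K (i j : 'I_p) :
  expmx_partial (z%:M : 'M[C]_p) K i j = ssum z K * (i == j)%:R.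
Proof.
rewrite /expmx_partial summxE /ssum mulr_suml; apply: eq_bigr => k _.
by rewrite scalar_pow !mxE -mulrA mulr_natr.
Qed.

Lemma scal_exp (z : C) : exists w : C,
  ccvg (ssum z) w /\ forall p, is_expmx (z%:M : 'M[C]_p) (w%:M).
Proof.
have [E1 h1] := expmx_ex (z%:M : 'M[C]_1).
have hs : ccvg (ssum z) (E1 0 0).
  have -> : ssum z = (fun N => expmx_partial (z%:M : 'M[C]_1) N 0 0).
    by apply: funext => N; rewrite partial_scalar eqxx mulr1.
  exact: h1.
exists (E1 0 0); split => // p i j.
change (ccvg (fun N => expmx_partial (z%:M : 'M[C]_p) N i j) ((E1 0 0)%:M i j)).
have -> : (fun N => expmx_partial (z%:M : 'M[C]_p) N i j) = (fun N => ssum z N * (i == j)%:R).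
  by apply: funext => N; rewrite partial_scalar.
rewrite mxE -(mulr_natr (E1 0 0)).
by apply: ccvgM => //; apply: ccvg_cst.
Qed.

Lemma ccvg_conj (u : nat -> C) (l : C) : ccvg u l -> ccvg (fun n => conjc (u n)) (conjc l).
Proof.
have hRe : forall x : C, complex.Re (conjc x) = complex.Re x by case.
have hIm : forall x : C, complex.Im (conjc x) = - complex.Im x by case.
move=> [h1 h2]; split.
  by under eq_fun do rewrite hRe; rewrite hRe.
by under eq_fun do rewrite hIm; rewrite hIm; apply: cvgN.
Qed.

Lemma ssum_conj z K : conjc (ssum z K) = ssum (conjc z) K.
Proof.
rewrite /ssum rmorph_sum; apply: eq_bigr => k _.
by rewrite rmorphM fmorphV rmorph_nat rmorphXn.
Qed.

Lemma exp0_1 : is_expmx (0 : 'M[C]_1) 1.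
Proof.
move=> i j.
change (ccvg (fun K => expmx_partial (0 : 'M[C]_1) K i j) ((1 : 'M[C]_1) i j)).
apply: (ccvg_n1 (ccvg_cst ((1 : 'M[C]_1) i j))).
have hc : (fun _ : nat => (0:R)) @ \oo --> (0:R) by apply: cvg_cst.
move: hc; apply: cvg_trans; apply: near_eq_cvg.
near=> K.
have hK : (0 < K)%N by near: K; exists 1%N.
have -> : expmx_partial (0 : 'M[C]_1) K = 1.
  rewrite /expmx_partial -(prednK hK).
  rewrite big_ord_recl /= expr0 fact0 invr1 scale1r big1 ?addr0 // => k _.
  by rewrite expr0n /= scaler0.
by rewrite subrr /n1 /= normr0 addr0.
Unshelve. all: by end_near.
Qed.

Lemma unit_exp (z : C) : conjc z = - z ->
  exists w : C, (forall p, is_expmx (z%:M : 'M[C]_p) (w%:M)) /\ `|w| = 1.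
Proof.
move=> hz.
have [w [hws hw]] := scal_exp z.
have [w' [hws' hw']] := scal_exp (- z).
have e1 : w' = conjc w.
  apply: (ccvg_unique hws'); rewrite -hz.
  have -> : ssum (conjc z) = (fun n => conjc (ssum z n)).
    by apply: funext => n; rewrite ssum_conj.
  exact: ccvg_conj.
have hD := expmxD (scalar_mxC _ _) (hw 1%N) (hw' 1%N).
have e0 : (z%:M + (- z)%:M : 'M[C]_1) = 0.
  by apply/matrixP => i j; rewrite !mxE -mulrnDl subrr mul0rn.
rewrite e0 in hD.
have e2 := mcvg_unique hD exp0_1.
have e3 : w * conjc w = 1.
  by move/matrixP: e2 => /(_ 0 0); rewrite !mxE big_ord1 !mxE /= !mulr1n e1.
exists w; split => //.
have e4 : complex.Re w ^+ 2 + complex.Im w ^+ 2 = 1.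
  have := congr1 (@complex.Re R) e3.
  by case: (w) => a b /= <-; ring.
by rewrite normc_def e4 sqrtr1.
Qed.

End Scalar.


Section Inc.
Variable R : realType.
Local Notation C := R[i].
Variables (n : nat) (adj : rel 'I_n).
Hypothesis hsym : symmetric adj.
Hypothesis hirr : irreflexive adj.

Definition incmx : 'M[C]_(n, #|edge_set adj|) :=
  \matrix_(v, e) (v \in (enum_val e : {set 'I_n}))%:R.

Lemma sum_ind (T : finType) (S : {set T}) :
  \sum_(x : T) ((x \in S)%:R : C) = #|S|%:R.
Proof.
rewrite (eq_bigr (fun x => if x \in S then 1 else 0)); last by move=> x _; case: (x \in S).
by rewrite -big_mkcond sumr_const.
Qed.

Lemma sum_ind2 (T : finType) (S : {set T}) (P : pred T) :
  \sum_(x in S) ((P x)%:R : C) = #|[set x in S | P x]|%:R.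
Proof.
rewrite big_mkcond -sum_ind; apply: eq_bigr => x _.
by rewrite finset.in_set; case: (x \in S).
Qed.

Lemma NtN : incmx^T *m incmx = line_graph_adjmx R adj + 2%:M.
Proof.
apply/matrixP => e f; rewrite !mxE.
rewrite (eq_bigr (fun v => ((v \in enum_val e :&: enum_val f) : bool)%:R)); last first.
  by move=> v _; rewrite !mxE -natrM mulnb finset.in_setI.
rewrite sum_ind.
have he := enum_valP e; have hf := enum_valP f.
case: (eqVneq e f) => [<-|hef].
  by rewrite finset.setIid (edge_card hirr he) /= add0r mulr1n.
have hEF : enum_val e != enum_val f.
  by apply: contra hef => /eqP /enum_val_inj ->.
have := edge_inter hirr he hf hEF.
rewrite /= mulr0n addr0 -finset.cards_eq0.
by case: #|_| => [|[|]].
Qed.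

Lemma NNt : incmx *m incmx^T = signless_laplacian R adj.
Proof.
apply/matrixP => u v; rewrite !mxE.
rewrite (eq_bigr (fun (e : 'I_#|edge_set adj|) => (((u \in enum_val e) && (v \in enum_val e)) : bool)%:R)); last first.
  by move=> e _; rewrite !mxE -natrM mulnb.
rewrite -(big_enum_val (fun (A : {set 'I_n}) => (((u \in A) && (v \in A)) : bool)%:R)) /=.
rewrite sum_ind2.
case: (eqVneq u v) => [<-|huv].
  have -> : #|[set k | adj u k]%classic| = #|[set k | adj u k]%SET|.
    by apply: eq_card => k; rewrite finset.in_set unfold_in /= asboolb.
  by rewrite (deg_card hsym hirr) hirr mul1r addr0.
by rewrite (pair_card hsym huv) mul0r add0r.
Qed.

Lemma Ne (a b : 'I_n) (i : 'I_#|edge_set adj|) : adj a b -> enum_val i = [set a; b]%SET ->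
  incmx *m evec R i = evec R a + evec R b.
Proof.
move=> hab ei; apply/matrixP => v j; rewrite !mxE.
rewrite (bigD1 i) //= big1 ?addr0; last first.
  by move=> e /negPf he; rewrite !mxE he mulr0.
rewrite !mxE eqxx mulr1 ei !inE.
have ab := adj_neq hirr hab.
case: (eqVneq v a) => [->|hva] /=.
  by rewrite (negPf ab) addr0.
by rewrite add0r.
Qed.

End Inc.


Lemma pow_comm (R : realType) p q (N : 'M[R[i]]_(p, q)) (c : R[i]) k :
  (c *: (N *m N^T)) ^+ k *m N = N *m (c *: (N^T *m N)) ^+ k.
Proof.
elim: k => [|k IH]; first by rewrite !expr0 mul1mx mulmx1.
rewrite !exprS -!mulmxE -mulmxA IH mulmxA -scalemxAl -mulmxA scalemxAr.
by rewrite mulmxA -scalemxAr.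
Qed.

Lemma partial_comm (R : realType) p q (N : 'M[R[i]]_(p, q)) (c : R[i]) K :
  expmx_partial (c *: (N *m N^T)) K *m N = N *m expmx_partial (c *: (N^T *m N)) K.
Proof.
rewrite /expmx_partial mulmx_suml mulmx_sumr; apply: eq_bigr => k _.
by rewrite -scalemxAl -scalemxAr pow_comm.
Qed.

Theorem mainTheorem10 (R : realType) (n : nat) (adj : rel 'I_n)
    (a b alpha beta : 'I_n) (i j : 'I_#|edge_set adj|) (tau : R) :
  simple_graph adj ->
  adj a b -> adj alpha beta ->
  enum_val i = [set a; b]%SET -> enum_val j = [set alpha; beta]%SET ->
  pst (line_graph_adjmx R adj) (evec R i) (evec R j) tau ->
  pst (signless_laplacian R adj) (evec R a + evec R b)
      (evec R alpha + evec R beta) tau.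
Proof.
move=> [hsym hirr] hab hab' ei ej [EL [hEL [eta [heta hELe]]]].
set c : R[i] := Complex 0 (- tau).
set N := incmx R adj.
have hz : conjc (c * 2) = - (c * 2).
  rewrite rmorphM rmorph_nat -mulNr; congr (_ * _).
  by apply/eqP; rewrite eq_complex /= oppr0 opprK !eqxx.
have [w [hw hw1]] := unit_exp hz.
have hB := expmxD (scalar_mxC _ _) hEL (hw _).
have eB : c *: line_graph_adjmx R adj + (c * 2)%:M = c *: (N^T *m N).
  rewrite /N (NtN _ hirr); apply/matrixP => x y; rewrite !mxE mulrDr.
  by case: (x == y); rewrite ?mulr1n ?mulr0n; ring.
rewrite eB in hB.
have [EQ hEQ] := expmx_ex (c *: signless_laplacian R adj).
exists EQ; split => //.
exists (w * eta); split; first by rewrite normrM hw1 heta mulr1.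
have key : EQ *m N = N *m (EL *m w%:M).
  rewrite -(NNt R hsym hirr) in hEQ.
  apply: (@mcvg_unique _ _ _ (fun K => expmx_partial (c *: (N *m N^T)) K *m N)).
    exact: mcvgM hEQ (mcvg_cst N).
  have -> : (fun K => expmx_partial (c *: (N *m N^T)) K *m N) =
      (fun K => N *m expmx_partial (c *: (N^T *m N)) K).
    by apply: funext => K; rewrite partial_comm.
  exact: mcvgM (mcvg_cst N) hB.
rewrite -(Ne R hirr hab ei) mulmxA key mul_mx_scalar -scalemxAr -scalemxAl -mulmxA hELe.
by rewrite -scalemxAr scalerA (Ne R hirr hab' ej).
Qed.
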